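(* For every preference profile $p\in\mathcal{P}$, the stabilizer $\mathrm{Stab}_{G^*}(p)=\{\varphi\in G^*: p^\varphi=p\}$ is a semiregular subgroup of $G^*$.
   Context: Fix $n\ge 2$, $W=\{1,\dots,n\}$, $M=\{n+1,\dots,2n\}$, $I=W\cup M$. Permutations compose right-to-left. A preference profile is a function $p$ on $I$ assigning to each $x\in W$ a linear order $p(x)$ on $M$ and to each $y\in M$ a linear order $p(y)$ on $W$; $\mathcal{P}$ is the set of preference profiles. $G^*=\{\varphi\in\mathrm{Sym}(I):\{\varphi(W),\varphi(M)\}=\{W,M\}\}$. For a linear order $R$ on $X\subseteq I$ and $\varphi\in\mathrm{Sym}(I)$, $\varphi R$ is the relation on $\varphi(X)$ with $(a,b)\in\varphi R$ iff $(\varphi^{-1}(a),\varphi^{-1}(b))\in R$. For $\varphi\in G^*$, $p^\varphi(z)=\varphi\,p(\varphi^{-1}(z))$. A subgroup $S\le\mathrm{Sym}(I)$ is semiregular if for every $z\in I$ the only element of $S$ fixing $z$ is the identity. *)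

(* Defs.v *)
From mathcomp Require Import all_boot all_order all_fingroup.
Set Implicit Arguments. Unset Strict Implicit. Unset Printing Implicit Defensive.
Local Open Scope group_scope.

(* The agent set I = {1,...,2n} is modelled by 'I_(n+n) = {0,...,2n-1};
   W = {1..n} corresponds to {0..n-1}, M = {n+1..2n} to {n..2n-1}. *)
Definition agents (n : nat) := 'I_(n + n).
Definition Wset (n : nat) : {set agents n} := [set i : agents n | (i < n)%N].
Definition Mset (n : nat) : {set agents n} := [set i : agents n | (n <= i)%N].

Definition linear_order_on (T : finType) (X : {set T}) (R : rel T) : Prop :=
  [/\ forall a b, R a b -> a \in X /\ b \in X,
      forall a, a \in X -> R a a,
      forall a b, R a b -> R b a -> a = b,
      forall a b c, R a b -> R b c -> R a c &
      forall a b, a \in X -> b \in X -> R a b || R b a].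

Definition is_profile (n : nat) (p : agents n -> rel (agents n)) : Prop :=
  (forall x, x \in Wset n -> linear_order_on (Mset n) (p x)) /\
  (forall y, y \in Mset n -> linear_order_on (Wset n) (p y)).

Definition Gstar (n : nat) : {set {perm agents n}} :=
  [set phi : {perm agents n} |
    ((phi @: Wset n == Wset n) && (phi @: Mset n == Mset n)) ||
    ((phi @: Wset n == Mset n) && (phi @: Mset n == Wset n))].

Definition perm_rel (T : finType) (phi : {perm T}) (R : rel T) : rel T :=
  fun a b => R (phi^-1 a) (phi^-1 b).

Definition profile_act (n : nat) (p : agents n -> rel (agents n))
  (phi : {perm agents n}) : agents n -> rel (agents n) :=
  fun z => perm_rel phi (p (phi^-1 z)).

Definition stab (n : nat) (p : agents n -> rel (agents n)) : {set {perm agents n}} :=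
  [set phi in Gstar n |
    [forall z, [forall a, [forall b, profile_act p phi z a b == p z a b]]]].

Definition semiregular (T : finType) (S : {set {perm T}}) : Prop :=
  forall phi z, phi \in S -> phi z = z -> phi = 1.

(* Main.v *)
Require Import Defs.
From mathcomp Require Import all_boot all_order all_fingroup.
Set Implicit Arguments. Unset Strict Implicit. Unset Printing Implicit Defensive.
Local Open Scope group_scope.

Lemma lin_aut_id (T : finType) (X : {set T}) (R : rel T) (phi : {perm T}) :
  linear_order_on X R -> (forall a b, R (phi a) (phi b) = R a b) ->
  forall a, a \in X -> phi a = a.
Proof.
case=> supp refl asym trans tot hphi.
pose D a := [set b | R b a].
have DE a : D (phi a) = phi @: D a.
  apply/setP=> c; rewrite inE.
  rewrite -{1}(permKV phi c) hphi.
  apply/idP/imsetP.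
    by move=> H; exists (phi^-1 c); rewrite ?inE ?permKV.
  by case=> b; rewrite inE => Hb ->; rewrite permK.
have Dinj a c : a \in X -> c \in X -> #|D a| = #|D c| -> a = c.
  move=> aX cX.
  wlog Hac : a c aX cX / R a c.
    move=> W; case/orP: (tot a c aX cX) => H E; first exact: W.
    by symmetry; apply: W => //.
  move=> E.
  have sub : D a \subset D c.
    by apply/subsetP=> b; rewrite !inE => Hb; apply: trans Hb Hac.
  have /eqP eq := eqEcard (D a) (D c); rewrite sub E leqnn /= in eq.
  have : c \in D a by rewrite eq inE refl.
  by rewrite inE => Hca; apply: asym.
move=> a aX.
have paX : phi a \in X by have [] := supp (phi a) (phi a); rewrite ?hphi ?refl.
by apply: Dinj => //; rewrite DE card_imset //; apply: perm_inj.
Qed.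

Lemma stabP n (p : agents n -> rel (agents n)) phi :
  phi \in stab p -> forall z a b, p (phi z) (phi a) (phi b) = p z a b.
Proof.
rewrite inE => /andP[_ /forallP H] z a b.
have := H (phi z); move/forallP/(_ (phi a))/forallP/(_ (phi b))/eqP.
by rewrite /profile_act /perm_rel !permK.
Qed.

Lemma stab_fix n (p : agents n -> rel (agents n)) phi z X :
  phi \in stab p -> phi z = z -> linear_order_on X (p z) ->
  forall a, a \in X -> phi a = a.
Proof.
move=> Hs Hz Hl; apply: (lin_aut_id Hl) => a b.
by rewrite -{1}Hz stabP.
Qed.

Lemma Gstar_mul n (phi psi : {perm agents n}) :
  phi \in Gstar n -> psi \in Gstar n -> phi * psi \in Gstar n.
Proof.
have E A : (phi * psi) @: A = psi @: (phi @: A).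
  apply/setP=> x; apply/imsetP/imsetP.
    by case=> y yA ->; exists (phi y); [apply/imsetP; exists y | rewrite permM].
  by case=> y /imsetP[w wA ->] ->; exists w; rewrite ?permM.
rewrite !inE !E.
by case/orP=> /andP[/eqP -> /eqP ->]; case/orP=> /andP[/eqP -> /eqP ->];
  rewrite !eqxx ?orbT.
Qed.

Lemma imset1 (T : finType) (A : {set T}) : (1 : {perm T}) @: A = A.
Proof.
apply/setP=> x; apply/imsetP/idP.
  by case=> y yA ->; rewrite perm1.
by move=> xA; exists x; rewrite ?perm1.
Qed.

Theorem theorem12 (n : nat) (hn : (2 <= n)%N)
  (p : agents n -> rel (agents n)) (hp : is_profile p) :
  [/\ stab p \subset Gstar n, group_set (stab p) & semiregular (stab p)].
Proof.
case: hp => hW hM.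
have hm : (n < n + n)%N by rewrite -addn1 leq_add2l; apply: leq_trans hn.
have hz : (0 < n + n)%N by apply: leq_ltn_trans hm.
pose yM : agents n := Ordinal hm.
pose yW : agents n := Ordinal hz.
have yMin : yM \in Mset n by rewrite inE.
have yWin : yW \in Wset n by rewrite inE /=; apply: leq_trans hn.
split.
- by apply/subsetP=> x; rewrite inE => /andP[].
- apply/andP; split.
    rewrite inE; apply/andP; split.
      by rewrite inE !imset1 !eqxx.
    by apply/forallP=> z; apply/forallP=> a; apply/forallP=> b;
       rewrite /profile_act /perm_rel invg1 !perm1.
  apply/subsetP=> x /mulsgP[phi psi Hphi Hpsi ->].
  rewrite inE Gstar_mul; last by move: Hpsi; rewrite inE => /andP[].
    2: by move: Hphi; rewrite inE => /andP[].
  apply/forallP=> z; apply/forallP=> a; apply/forallP=> b.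
  rewrite /profile_act /perm_rel !invMg !permM.
  have H1 := stabP Hphi; have H2 := stabP Hpsi.
  by rewrite -H1 !permKV -H2 !permKV.
- move=> phi z Hs Hz.
  have fixM : (exists2 w, w \in Wset n & phi w = w) -> forall a, a \in Mset n -> phi a = a.
    by case=> w wW Hw; apply: (stab_fix Hs Hw); apply: hW.
  have fixW : (exists2 w, w \in Mset n & phi w = w) -> forall a, a \in Wset n -> phi a = a.
    by case=> w wW Hw; apply: (stab_fix Hs Hw); apply: hM.
  have zWM : (z \in Wset n) || (z \in Mset n) by rewrite !inE ltnNge orNb.
  have [FW FM] : (forall a, a \in Wset n -> phi a = a) /\ (forall a, a \in Mset n -> phi a = a).
    case/orP: zWM => zin.
      have FM := fixM (ex_intro2 _ _ z zin Hz).
      by split=> //; apply: fixW; exists yM => //; apply: FM.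
    have FW := fixW (ex_intro2 _ _ z zin Hz).
    by split=> //; apply: fixM; exists yW => //; apply: FW.
  apply/permP=> a; rewrite perm1.
  have : (a \in Wset n) || (a \in Mset n) by rewrite !inE ltnNge orNb.
  by case/orP; [apply: FW | apply: FM].
Qed.
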